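(* Let $G$ be a topological group admitting an unbounded lower semi-continuous invariant length function. Then $G$ fails topological bounded normal generation.
   Context: A lower semi-continuous invariant length function on $G$ is a map $l:G\to[0,+\infty]$ with $l(1_G)=0$, $l(g^{-1})=l(g)$, $l(gh)\le l(g)+l(h)$, $l(ghg^{-1})=l(h)$ for all $g,h\in G$, and such that $l^{-1}([0,r])$ is closed for every $r\ge0$. It is unbounded if for every $K\in\mathbb N$ there is $g\in G$ with $l(g)\in\,]K,+\infty[$. For $g\in G$, $g^{\pm G}=\{hgh^{-1}:h\in G\}\cup\{hg^{-1}h^{-1}:h\in G\}$; $A^{\cdot n}$ is the set of products of $n$ elements of $A$. $G$ has topological bounded normal generation if for every nontrivial $g\in G$ there is $n(g)\in\mathbb N$ with $\overline{(g^{\pm G})^{\cdot n(g)}}=G$. *)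

(* Defs.v *)
From HB Require Import structures.
From mathcomp Require Import all_boot all_order all_algebra.
From mathcomp Require Import all_classical all_reals all_analysis.
Set Implicit Arguments. Unset Strict Implicit. Unset Printing Implicit Defensive.
Import Order.TTheory GRing.Theory Num.Theory.
Local Open Scope classical_set_scope.
Local Open Scope ring_scope.

Record topGroup (T : topologicalType) := TopGroup {
  tg_mul : T -> T -> T;
  tg_inv : T -> T;
  tg_one : T;
  tg_mulA : forall x y z, tg_mul x (tg_mul y z) = tg_mul (tg_mul x y) z;
  tg_mul1g : forall x, tg_mul tg_one x = x;
  tg_mulg1 : forall x, tg_mul x tg_one = x;
  tg_mulVg : forall x, tg_mul (tg_inv x) x = tg_one;
  tg_mulgV : forall x, tg_mul x (tg_inv x) = tg_one;
  tg_mul_cont : continuous (fun p : T * T => tg_mul p.1 p.2);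
  tg_inv_cont : continuous tg_inv
}.

Section Defs.
Context {T : topologicalType} (G : topGroup T).
Local Notation mul := (tg_mul G).
Local Notation inv := (tg_inv G).
Local Notation one := (tg_one G).

Definition lsc_invariant_length {R : realType} (l : T -> \bar R) : Prop :=
  [/\ (forall g, (0 <= l g)%E) /\ l one = 0%E,
      (forall g, l (inv g) = l g),
      (forall g h, (l (mul g h) <= l g + l h)%E),
      (forall g h, l (mul (mul g h) (inv g)) = l h)
    & (forall r : R, 0 <= r -> closed [set g | (l g <= r%:E)%E])].

Definition unbounded_length {R : realType} (l : T -> \bar R) : Prop :=
  forall K : nat, exists g, (K%:R%:E < l g)%E /\ (l g < +oo)%E.

Definition conj_pm (g : T) : set T :=
  [set x | exists h, x = mul (mul h g) (inv h)] `|` [set x | exists h, x = mul (mul h (inv g)) (inv h)].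

Fixpoint prodn (A : set T) (n : nat) : set T :=
  match n with
  | 0 => [set one]
  | n.+1 => [set x | exists a b, [/\ A a, prodn A n b & x = mul a b]]
  end.

Definition top_bounded_normal_generation : Prop :=
  forall g, g <> one ->
    exists n : nat, (0 < n)%N /\ closure (prodn (conj_pm g) n) = setT.

End Defs.

(* Main.v *)
Require Import Defs.
From mathcomp Require Import all_boot all_order all_algebra.
From mathcomp Require Import all_classical all_reals all_analysis.
Import Order.TTheory GRing.Theory Num.Theory.
Local Open Scope classical_set_scope.
Local Open Scope ring_scope.

Theorem mainTheorem6 (R : realType) (T : topologicalType) (G : topGroup T)
  (l : T -> \bar R) :
  lsc_invariant_length G l -> unbounded_length l ->
  ~ top_bounded_normal_generation G.
Proof.
move=> [[l0 l1] linv ltri lconj lcl] unb tbng.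
have [g [g1 goo]] := unb 1%N.
have lg0 : (0 <= l g)%E := l0 g.
have gfin : l g = (fine (l g))%:E.
  by rewrite fineK // ge0_fin_numE.
set c := fine (l g) in gfin.
have c0 : 0 <= c by rewrite -lee_fin -gfin.
have gne : g <> tg_one G.
  by move=> E; move: g1; rewrite E l1 lte_fin ltr10.
have [n [_ Hn]] := tbng g gne.
have conjl : forall x, conj_pm G g x -> l x = l g.
  move=> x [[h ->]|[h ->]]; first by rewrite lconj.
  by rewrite lconj linv.
have bnd : forall m x, prodn G (conj_pm G g) m x -> (l x <= (m%:R * c)%:E)%E.
  elim=> [|m IH] x /=.
    by move=> ->; rewrite l1 mul0r.
  move=> [a [b [Ha Hb ->]]].
  apply: le_trans (ltri a b) _.
  rewrite (conjl _ Ha) gfin.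
  have := IH _ Hb => Hb'.
  apply: le_trans (leeD (lexx _) Hb') _.
  by rewrite -EFinD lee_fin mulrSr mulrDl mul1r addrC.
have r0 : 0 <= n%:R * c by rewrite mulr_ge0.
have sub : closure (prodn G (conj_pm G g) n) `<=` [set x | (l x <= (n%:R * c)%:E)%E].
  rewrite [X in _ `<=` X](closure_id _).1; last exact: lcl.
  by apply: closure_subset => x /bnd.
have [h [h1 hoo]] := unb (Num.Def.trunc (n%:R * c)).+1.
have : (l h <= (n%:R * c)%:E)%E by apply: sub; rewrite Hn.
move=> H; move: (lt_le_trans h1 H); rewrite lte_fin => /(lt_trans (truncnS_gt _)).
by rewrite ltxx.
Qed.
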